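(* Let $S$ be a finite subdirectly indecomposable semigroup such that $\llbracket S\rrbracket$ is join irreducible and $S$ is of semisimple type (left letter mapping, right letter mapping, or group mapping). Then $\operatorname{Excl}(S)$ is large, i.e. $\mathbf{1}\mathbin{ⓜ}\operatorname{Excl}(S)=\operatorname{Excl}(S)$.
   Context: All semigroups are finite. A pseudovariety is a class of finite semigroups closed under finite direct products, subsemigroups and homomorphic images; $\llbracket S\rrbracket$ is the pseudovariety generated by $S$; $\mathbf{1}$ is the trivial pseudovariety. A pseudovariety $\mathbf{V}$ is join irreducible if for every set $\mathscr{X}$ of pseudovarieties, $\mathbf{V}\subseteq\bigvee\mathscr{X}$ implies $\mathbf{V}\subseteq\mathbf{X}$ for some $\mathbf{X}\in\mathscr{X}$; $\operatorname{Excl}(S)$ is the class of finite semigroups $T$ with $S\notin\llbracket T\rrbracket$ (a pseudovariety when $\llbracket S\rrbracket$ is join irreducible). The Mal'cev product $\mathbf{V}\mathbin{ⓜ}\mathbf{W}$ is the pseudovariety generated by all finite semigroups $S$ admitting a homomorphism $\varphi\colon S\to T$ with $T\in\mathbf{W}$ and $e\varphi^{-1}\in\mathbf{V}$ for every idempotent $e\in T$. A semigroup $S$ is subdirectly indecomposable if whenever $S$ is a subsemigroup of $S_1\times S_2$ projecting onto both factors, one of the projections is an isomorphism. Such a finite $S$ has a unique $0$-minimal ideal $I$ (the minimal ideal if $S$ has no zero). $S$ is left letter mapping if $S$ acts faithfully on the right of the set of $\mathscr L$-classes of $I$; right letter mapping if $S$ acts faithfully on the left of the set of $\mathscr R$-classes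 of $I$; group mapping if $I$ contains a nontrivial maximal subgroup and $S$ acts faithfully on both the left and the right of $I$. *)

(* Defs.v *)
From mathcomp Require Import all_boot.
Set Implicit Arguments. Unset Strict Implicit. Unset Printing Implicit Defensive.

Record fsg := FSG {
  car :> finType;
  sop : car -> car -> car;
  sassoc : associative sop }.

Definition surjective (A B : Type) (f : A -> B) : Prop := forall y, exists x, f x = y.

Definition is_hom (A B : fsg) (f : A -> B) : Prop :=
  forall x y : A, f (sop x y) = sop (f x) (f y).

Definition prod_op (A B : fsg) (x y : (A * B)%type) : (A * B)%type :=
  (sop x.1 y.1, sop x.2 y.2).
Lemma prod_assoc (A B : fsg) : associative (@prod_op A B).
Proof. by move=> [a b] [c d] [e g]; rewrite /prod_op /= !sassoc. Qed.
Definition fsg_prod (A B : fsg) : fsg := FSG (@prod_assoc A B).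

Definition unit_op (x y : unit) : unit := tt.
Lemma unit_assoc : associative unit_op. Proof. by []. Qed.
Definition fsg_unit : fsg := FSG unit_assoc.

Definition sclass := fsg -> Prop.

Definition sub_class (V W : sclass) : Prop := forall T, V T -> W T.

(** Pseudovariety: contains the one-element semigroup (empty product), closed
   under binary direct products, subsemigroups (injective homomorphisms into a
   member) and homomorphic images (surjective homomorphisms from a member). *)
Definition pseudovariety (V : sclass) : Prop :=
  [/\ V fsg_unit,
      (forall A B, V A -> V B -> V (fsg_prod A B)),
      (forall (T U : fsg) (f : T -> U), is_hom f -> injective f -> V U -> V T) &
      (forall (U T : fsg) (f : U -> T), is_hom f -> surjective f -> V U -> V T)].

Definition gen (C : sclass) : sclass :=
  fun T => forall V, pseudovariety V -> sub_class C V -> V T.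

Definition gen1 (S : fsg) : sclass := gen (fun T => exists f : S -> T,
  is_hom f /\ bijective f).

Definition trivialPV : sclass := fun T => #|T| = 1%N.

Definition join (X : sclass -> Prop) : sclass :=
  gen (fun T => exists2 V, X V & V T).

Definition join_irreducible (V : sclass) : Prop :=
  forall X : sclass -> Prop, (forall W, X W -> pseudovariety W) ->
    sub_class V (join X) -> exists2 W, X W & sub_class V W.

Definition Excl (S : fsg) : sclass := fun T => ~ gen1 T S.

Definition sub_in (V : sclass) (S : fsg) (A : pred S) : Prop :=
  exists U : fsg, V U /\ exists f : U -> S,
    [/\ is_hom f, injective f & forall x, A x <-> exists u, f u = x].

Definition malcev (V W : sclass) : sclass :=
  gen (fun S => exists T : fsg, W T /\ exists phi : S -> T, is_hom phi /\
         forall e : T, sop e e = e -> (exists s, phi s = e) ->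
           sub_in V (fun s => phi s == e)).

Definition subdirectly_indecomposable (S : fsg) : Prop :=
  forall (S1 S2 : fsg) (i : S -> fsg_prod S1 S2),
    is_hom i -> injective i ->
    surjective (fun s => (i s).1) -> surjective (fun s => (i s).2) ->
    bijective (fun s => (i s).1) \/ bijective (fun s => (i s).2).

Section Ideals.
Variable S : fsg.
Implicit Types (x y z : S) (I J : {set S}).

Definition is_zero z := forall x, sop z x = z /\ sop x z = z.
Definition has_zero := exists z, is_zero z.

Definition ideal I :=
  I != set0 /\ forall x s, x \in I -> sop x s \in I /\ sop s x \in I.

Definition minimal_ideal I := ideal I /\ forall J, ideal J -> J \subset I -> J = I.

Definition zero_minimal_ideal z I :=
  ideal I /\ I != [set z] /\
  forall J, ideal J -> J \subset I -> J = [set z] \/ J = I.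

Definition distinguished_ideal I :=
  (forall z, is_zero z -> zero_minimal_ideal z I) /\ (~ has_zero -> minimal_ideal I).

(** Green's relations (in S, via S^1) *)
Definition leL x y := x = y \/ exists u, x = sop u y.
Definition leR x y := x = y \/ exists u, x = sop y u.
Definition GL x y := leL x y /\ leL y x.
Definition GR x y := leR x y /\ leR y x.
Definition GH x y := GL x y /\ GR x y.

(** Left letter mapping: S acts faithfully on the right of the set of
   L-classes of I (action L_x . s = L_{xs}). *)
Definition left_letter_mapping :=
  exists I, distinguished_ideal I /\
    forall s t : S, (forall x, x \in I -> GL (sop x s) (sop x t)) -> s = t.

(** Right letter mapping: S acts faithfully on the left of the set of
   R-classes of I (action s . R_x = R_{sx}). *)
Definition right_letter_mapping :=
  exists I, distinguished_ideal I /\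
    forall s t : S, (forall x, x \in I -> GR (sop s x) (sop t x)) -> s = t.

(** Group mapping: I contains a nontrivial maximal subgroup (H-class of an
   idempotent), and S acts faithfully on both sides of I. *)
Definition group_mapping :=
  exists I, distinguished_ideal I /\
    [/\ (exists e, [/\ e \in I, sop e e = e & exists x, x != e /\ GH x e]),
        (forall s t : S, (forall x, x \in I -> sop x s = sop x t) -> s = t) &
        (forall s t : S, (forall x, x \in I -> sop s x = sop t x) -> s = t)].

Definition semisimple_type :=
  left_letter_mapping \/ right_letter_mapping \/ group_mapping.
End Ideals.

(* Main.v *)
Require Import Defs.
From mathcomp Require Import all_boot.
From Stdlib Require Import Classical.
From mathcomp Require Import zify.
From Stdlib Require Import Lia.
Set Implicit Arguments. Unset Strict Implicit. Unset Printing Implicit Defensive.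

Lemma gen_pv C : pseudovariety (gen C).
Proof.
split.
- by move=> V [hu _ _ _] _.
- move=> A B hA hB V hV hC; case: (hV) => _ hp _ _; apply: hp; [exact: hA|exact: hB].
- move=> T U f hf fi hU V hV hC; case: (hV) => _ _ hs _; exact: (hs _ _ f hf fi (hU V hV hC)).
- move=> U T f hf fs hU V hV hC; case: (hV) => _ _ _ hq; exact: (hq _ _ f hf fs (hU V hV hC)).
Qed.

Lemma gen_sub C : sub_class C (gen C).
Proof. by move=> T hT V _ hC; apply: hC. Qed.

Lemma gen_min C V : pseudovariety V -> sub_class C V -> sub_class (gen C) V.
Proof. by move=> hV hC T hT; apply: hT. Qed.

Lemma gen1_self A : gen1 A A.
Proof. apply: gen_sub; exists id; split => //; by exists id. Qed.

Lemma pv_iso V A : pseudovariety V -> V A -> sub_class (gen1 A) V.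
Proof.
move=> hV hA; apply: gen_min => // T [f [hf [g fg gf]]].
case: (hV) => _ _ _ hq; apply: (hq _ _ f hf _ hA) => y; by exists (g y).
Qed.

Lemma gen1_trans A B C : gen1 A B -> gen1 B C -> gen1 A C.
Proof.
move=> hAB hBC V hV hC; have hB : V B := hAB V hV hC.
exact: (pv_iso hV hB hBC).
Qed.

Lemma pv_small V (T : fsg) : pseudovariety V -> #|T| <= 1 -> V T.
Proof.
move=> hV; case: (hV) => hu _ hs hq.
rewrite leq_eqVlt ltnS leqn0; case/orP => /eqP h.
- case: (fintype1 h) => x0 hx0.
  apply: (hq fsg_unit T (fun _ => x0)); last by [].
  + by move=> a b; rewrite (hx0 (sop x0 x0)).
  + by move=> y; exists tt; rewrite (hx0 y).
- apply: (hs T fsg_unit (fun _ => tt)); [by [] | | by []].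
  by move=> x; case: (fintype0 x h).
Qed.

Definition small : sclass := fun T => #|T| <= 1.

Lemma surj_card (U T : finType) (f : U -> T) : surjective f -> #|T| <= #|U|.
Proof.
move=> fs.
have ex : forall y, exists x, f x == y by move=> y; case: (fs y) => x <-; exists x.
pose g y := xchoose (ex y).
have fg : forall y, f (g y) = y by move=> y; apply/eqP; exact: (xchooseP (ex y)).
apply: (@leq_card _ _ g) => a b hab; by rewrite -(fg a) -(fg b) hab.
Qed.

Lemma small_pv : pseudovariety small.
Proof.
split; rewrite /small.
- by rewrite card_unit.
- move=> A B hA hB; rewrite /fsg_prod /=.
  change (#|{: (A * B)%type}| <= 1); rewrite card_prod.
  by rewrite -(muln1 1); apply: leq_mul.
- move=> T U f _ fi hU; apply: leq_trans hU; exact: (@leq_card (car T) (car U) f fi).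
- move=> U T f _ fs hU; apply: leq_trans hU; exact: (@surj_card (car U) (car T) f fs).
Qed.

Section ExclPV.
Variable S : fsg.
Hypothesis hJI : join_irreducible (gen1 S).

Lemma S_big : 1 < #|S|.
Proof.
rewrite ltnNge; apply/negP => h.
have := hJI (X := fun _ => False) (fun W (f : False) => match f with end).
case.
- apply: pv_iso; first exact: gen_pv.
  exact: pv_small (gen_pv _) h.
- by move=> W [].
Qed.

Lemma Excl_pv : pseudovariety (Excl S).
Proof.
split.
- move=> h; have : small S by apply: (pv_iso small_pv _ h); rewrite /small card_unit.
  by rewrite /small leqNgt S_big.
- move=> A B hA hB hAB.
  pose X := fun V => V = gen1 A \/ V = gen1 B.
  have hX : forall W, X W -> pseudovariety W by move=> W [] ->; exact: gen_pv.
  case: (hJI hX).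
  + apply: pv_iso; first exact: gen_pv.
    apply: (pv_iso (gen_pv _) _ hAB).
    case: (gen_pv (fun T => exists2 V, X V & V T)) => _ hp _ _.
    apply: hp; apply: gen_sub.
    * exists (gen1 A); [by left | exact: gen1_self].
    * exists (gen1 B); [by right | exact: gen1_self].
  + move=> W hXW hW; have hS := hW _ (@gen1_self S).
    by case: hXW => hWe; rewrite hWe in hS; [apply: hA | apply: hB].
- move=> T U f hf fi hU hT; apply: hU; apply: gen1_trans hT.
  case: (gen_pv (fun T0 => exists f : U -> T0, is_hom f /\ bijective f)) => _ _ hs _.
  exact: (hs _ _ f hf fi (@gen1_self U)).
- move=> U T f hf fs hU hT; apply: hU; apply: gen1_trans hT.
  case: (gen_pv (fun T0 => exists f : U -> T0, is_hom f /\ bijective f)) => _ _ _ hq.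
  exact: (hq _ _ f hf fs (@gen1_self U)).
Qed.
End ExclPV.

Section Alg.
Variable S : fsg.
Implicit Types (x y z a b c : S) (u v w : option S).

Definition m1 u x : S := if u is Some u then sop u x else x.
Definition m1r x v : S := if v is Some v then sop x v else x.
Definition omul u v : option S :=
  match u, v with
  | Some a, Some b => Some (sop a b)
  | Some a, None => Some a
  | None, v => v end.

Lemma m1A u v x : m1 u (m1 v x) = m1 (omul u v) x.
Proof. by case: u; case: v => //= a b; rewrite sassoc. Qed.
Lemma m1rA x u v : m1r (m1r x u) v = m1r x (omul u v).
Proof. by case: u; case: v => //= a b; rewrite sassoc. Qed.
Lemma m1m1r u x v : m1 u (m1r x v) = m1r (m1 u x) v.
Proof. by case: u; case: v => //= a b; rewrite sassoc. Qed.
Lemma sop_m1 u x y : sop (m1 u x) y = m1 u (sop x y).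
Proof. by case: u => //= a; rewrite sassoc. Qed.
Lemma m1r_sop x y v : m1r (sop x y) v = sop x (m1r y v).
Proof. by case: v => //= a; rewrite sassoc. Qed.
Lemma sop_m1' x u y : sop x (m1 u y) = sop (m1r x u) y.
Proof. by case: u => //= a; rewrite sassoc. Qed.

Lemma leLP x y : leL x y <-> exists u, x = m1 u y.
Proof.
split.
- by case=> [->|[u ->]]; [exists None | exists (Some u)].
- by case=> [[u|] ->]; [right; exists u | left].
Qed.
Lemma leRP x y : leR x y <-> exists v, x = m1r y v.
Proof.
split.
- by case=> [->|[u ->]]; [exists None | exists (Some u)].
- by case=> [[u|] ->]; [right; exists u | left].
Qed.
Lemma leL_trans x y z : leL x y -> leL y z -> leL x z.
Proof.
move=> /leLP [u ->] /leLP [v ->]; apply/leLP; exists (omul u v); exact: m1A.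
Qed.
Lemma leR_trans x y z : leR x y -> leR y z -> leR x z.
Proof.
move=> /leRP [u ->] /leRP [v ->]; apply/leRP; exists (omul v u); exact: m1rA.
Qed.

Fixpoint pow x n : S := if n is n'.+1 then sop (pow x n') x else x.

Lemma pow_add x m n : sop (pow x m) (pow x n) = pow x (m + n).+1.
Proof.
elim: n => [|n IH] /=; first by rewrite addn0.
by rewrite sassoc IH addnS.
Qed.
Lemma pow_comm x n : sop x (pow x n) = pow x n.+1.
Proof. by rewrite -[x in sop x _]/(pow x 0) pow_add. Qed.
Lemma pow_idem e n : sop e e = e -> pow e n = e.
Proof. by move=> he; elim: n => //= n ->. Qed.

Lemma pow_period x i p : pow x i = pow x (i + p) ->
  forall q, pow x i.+1 = pow x (i + p).+1 /\ forall m, pow x (i + m) = pow x (i + m + p * q).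
Proof.
move=> h q; split; first by rewrite /= h.
have h1 : forall m, pow x (i + m) = pow x (i + m + p).
  elim=> [|m IH]; first by rewrite addn0.
  by rewrite addnS addSn /= IH.
move=> m; elim: q => [|q IH]; first by rewrite muln0 addn0.
rewrite IH -!addnA h1; congr pow; lia.
Qed.

Lemma pow_idem_ex x : exists n, sop (pow x n) (pow x n) = pow x n.
Proof.
pose f (i : 'I_(#|S|.+1)) := pow x i.
have : ~~ injectiveb f.
  apply/negP => /injectiveP fi; have := leq_card _ fi.
  by rewrite card_ord ltnn.
case/injectivePn => i [j] ij fij.
wlog lt : i j ij fij / i < j.
  move=> H; case: (ltngtP i j) => h.
  - exact: (H i j).
  - by apply: (H j i); rewrite // eq_sym.
  - by move: ij; rewrite (val_inj h) eqxx.
rewrite /f in fij.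
set p := j - i.
have hp : 0 < p by rewrite subn_gt0.
have hij : pow x i = pow x (i + p) by rewrite subnKC ?fij // ltnW.
have per := fun q => (pow_period hij q).2.
have [k hk] : exists k, p = k.+1 by exists p.-1; rewrite prednK.
rewrite hk in per.
exists (i + (i * k + k)).
rewrite pow_add [in RHS](per i.+1); congr pow; lia.
Qed.

Lemma zero_uniq z z' : is_zero z -> is_zero z' -> z = z'.
Proof. by move=> h h'; case: (h z') => <- _; case: (h' z) => _ ->. Qed.

End Alg.

Section M.
Variable S : fsg.
Implicit Types (x y z a b c : S) (u v w : option S).
Lemma omulA u v w : omul u (omul v w) = omul (omul u v) w.
Proof. by case: u; case: v; case: w => //= *; rewrite sassoc. Qed.
Lemma SomeM a b : Some (sop a b) = omul (Some a) (Some b). Proof. by []. Qed.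
Lemma Some_m1 u x : Some (m1 u x) = omul u (Some x). Proof. by case: u. Qed.
Lemma Some_m1r x v : Some (m1r x v) = omul (Some x) v. Proof. by case: v. Qed.
Lemma zero_m1 k u v : is_zero k -> m1 u (m1r k v) = k.
Proof.
by move=> hz; case: v => [v|] /=; [case: (hz v) => -> _|]; case: u => [u|] //=; case: (hz u).
Qed.
Lemma omul_none u : omul u None = u. Proof. by case: u. Qed.
End M.

Section Core.
Variable S : fsg.
Variable I : {set S}.
Implicit Types (x y z a b c : S) (u v w : option S).
Hypothesis HI : forall x s, x \in I -> sop x s \in I /\ sop s x \in I.
Hypothesis Hj : forall c k, c \in I -> k \in I -> ~ is_zero k ->
  exists u v, c = m1 u (m1r k v).

Lemma m1_in u y : y \in I -> m1 u y \in I.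
Proof. by case: u => //= a /(HI a) []. Qed.
Lemma m1r_in y v : y \in I -> m1r y v \in I.
Proof. by case: v => //= a /(HI a) []. Qed.

Lemma stabL c m u v : c = m1 u (m1r (sop m c) v) -> leL c (sop m c).
Proof.
move=> hc.
pose a := m1 u m.
have hc1 : c = sop a (m1r c v) by rewrite {1}hc m1m1r -sop_m1 m1r_sop.
have it : forall n, exists v', c = sop (pow a n) (m1r c v').
  elim=> [|n [v' IH]]; first by exists v.
  exists (omul v v'); rewrite /= -sassoc -m1rA -m1r_sop -hc1.
  exact: IH.
case: (pow_idem_ex a) => n hn.
case: (it n) => v' hv'.
have hec : sop (pow a n) c = c by rewrite {2}hv' {1}hv' sassoc hn.
case: n hn hv' hec => [|n] _ _ hec.
- apply/leLP; exists u; by rewrite -sop_m1 -/a hec.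
- apply/leLP; exists (Some (m1r (pow a n) u)).
  by rewrite /= -sop_m1' -sop_m1 -/a sassoc; symmetry; exact: hec.
Qed.

Hypothesis He : exists e, [/\ e \in I, sop e e = e & ~ is_zero e].

Lemma regL c : c \in I -> exists f, sop f f = f /\ GL f c.
Proof.
move=> cI.
case: (classic (is_zero c)) => [hz|hnz].
  exists c; split; first by case: (hz c).
  by split; left.
case: He => e [eI ee enz].
case: (Hj eI cI hnz) => p [q he].
pose m := m1r (m1 q e) p.
pose k := sop m c.
have hE : Some e = omul p (omul (Some c) q) by rewrite he Some_m1 Some_m1r.
have hE' : forall X, omul p (omul (Some c) (omul q X)) = omul (Some e) X.
  by move=> X; rewrite hE !omulA.
have hEE : forall X, omul (Some e) (omul (Some e) X) = omul (Some e) X.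
  by move=> X; rewrite omulA -SomeM ee.
have hK : Some k = omul q (omul (Some e) (omul p (Some c))).
  by rewrite /k /m SomeM Some_m1r Some_m1 -!omulA.
have kk : sop k k = k.
  apply: Some_inj; rewrite SomeM hK -!omulA hE' hEE.
  by rewrite hEE.
have kI : k \in I by case: (HI m cI).
have knz : ~ is_zero k.
  move=> hz; apply: enz.
  have : e = m1 p (m1r (sop c k) q).
    apply: Some_inj; rewrite Some_m1 Some_m1r SomeM hK -!omulA hE' hEE.
    by rewrite -hE -SomeM ee.
  case: (hz c) => _ ->.
  have -> : m1 p (m1r k q) = k.
    exact: zero_m1.
  by move=> ->.
exists k; split => //; split; first by right; exists m.
case: (Hj cI kI knz) => u [v huv].
exact: (stabL huv).
Qed.

Variable R : S -> S -> Prop.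
Hypothesis Rc : forall p a b, R a b -> R (sop p a) (sop p b).
Hypothesis Ri : forall a b, R a b -> sop a a = a -> sop a b = a.

Lemma leL_R c d : R c d -> c \in I -> leL c d.
Proof.
move=> hcd cI.
case: (regL cI) => f [ff [hfc hcf]].
move/leLP: hfc => [u hu].
have hR : R f (m1 u d) by rewrite hu; case: u {hu} => //= u; exact: Rc.
have h1 : sop f (m1 u d) = f := Ri hR ff.
apply: (leL_trans hcf); apply: (@leL_trans _ _ (m1 u d)).
  by right; exists f.
by apply/leLP; exists u.
Qed.

Lemma he_lemma : (exists c x, [/\ c \in I, x \in I & ~ is_zero (sop x c)]) ->
  exists e, [/\ e \in I, sop e e = e & ~ is_zero e].
Proof.
case=> c [x [cI xI hnz]].
have xcI : sop x c \in I by case: (HI c xI).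
case: (Hj xI xcI hnz) => u [v huv].
pose w := m1r c v.
have hx : x = m1 u (sop x w) by rewrite /w -m1r_sop.
have it : forall n, exists o, x = m1 o (pow w n).
  elim=> [|n [o IH]].
    by exists (omul u (Some x)); rewrite {1}hx -m1A.
  by exists (omul u o); rewrite {1}hx {1}IH sop_m1 m1A.
case: (pow_idem_ex w) => n hn.
case: (it n) => o ho.
have wI : w \in I by apply: m1r_in.
have pI : forall n, pow w n \in I.
  by elim=> [|n' IH] //=; case: (HI w IH).
exists (pow w n); split => // hz; apply: hnz.
have -> : x = pow w n by rewrite ho -[pow w n]/(m1r (pow w n) None) zero_m1.
suff -> : sop (pow w n) c = pow w n by [].
by case: (hz c).
Qed.
End Core.

Lemma dual_assoc (S : fsg) : associative (fun x y : S => sop y x).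
Proof. by move=> x y z /=; rewrite sassoc. Qed.
Definition dual (S : fsg) : fsg := @FSG S (fun x y => sop y x) (@dual_assoc S).

Section Dist.
Variable S : fsg.
Implicit Types (x y z a b c k : S) (u v w : option S).

Definition HIp (I : {set S}) := forall x s, x \in I -> sop x s \in I /\ sop s x \in I.
Definition Hjp (I : {set S}) := forall c k, c \in I -> k \in I -> ~ is_zero k ->
  exists u v, c = m1 u (m1r k v).

Lemma dist_props I : distinguished_ideal I -> [/\ HIp I, exists c, c \in I & Hjp I].
Proof.
case=> hz hnz.
have hid : ideal I.
  case: (classic (has_zero S)) => [[z hzz]|h]; first by case: (hz z hzz).
  by case: (hnz h).
case: hid => ne cl.
have HI : HIp I by move=> x s xI; exact: cl.
split => //.
  by case/set0Pn: ne => c cI; exists c.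
move=> c k cI kI knz.
pose J := [set x | [exists u, exists v, x == m1 u (m1r k v)]].
have kJ : k \in J by rewrite inE; apply/existsP; exists None; apply/existsP; exists None.
have hJ : ideal J.
  split; first by apply/set0Pn; exists k.
  move=> x s; rewrite !inE => /existsP [u /existsP [v /eqP ->]].
  split; apply/existsP.
  - exists u; apply/existsP; exists (omul v (Some s)); apply/eqP.
    by rewrite sop_m1 -m1rA.
  - exists (omul (Some s) u); apply/existsP; exists v; apply/eqP.
    by rewrite -m1A.
have JI : J \subset I.
  apply/subsetP => x; rewrite inE => /existsP [u /existsP [v /eqP ->]].
  by apply: (m1_in HI); apply: (m1r_in HI).
suff : J = I.
  by move=> hJI; move: cI; rewrite -hJI inE => /existsP [u /existsP [v /eqP ->]]; exists u, v.
case: (classic (has_zero S)) => [[z hzz]|h].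
- case: (hz z hzz) => _ [_ hmin]; case: (hmin J hJ JI) => // hJz.
  exfalso; apply: knz; move: kJ; rewrite hJz inE => /eqP ->; exact: hzz.
- by case: (hnz h) => _ hmin; apply: hmin.
Qed.

End Dist.
Section Dual.
Variable S : fsg.
Implicit Types (x y z a b c k : S) (u v w : option S).
Lemma zero_dual x : is_zero (S:=dual S) x <-> is_zero x.
Proof. by split=> h y; case: (h y). Qed.
Lemma m1_dual u x : m1 (S:=dual S) u x = m1r x u. Proof. by case: u. Qed.
Lemma m1r_dual x u : m1r (S:=dual S) x u = m1 u x. Proof. by case: u. Qed.

Lemma HI_dual (I : {set S}) : HIp I -> HIp (S:=dual S) I.
Proof. by move=> h x s xI; case: (h x s xI). Qed.
Lemma Hj_dual (I : {set S}) : Hjp I -> Hjp (S:=dual S) I.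
Proof.
move=> h c k cI kI knz.
have knz' : ~ is_zero (k : S) by move=> hk; apply: knz; exact: (proj2 (zero_dual k) hk).
case: (h c k cI kI knz') => u [v ->]; exists v, u.
by rewrite m1_dual m1r_dual m1m1r.
Qed.
End Dual.

Definition Hep (S : fsg) (I : {set S}) :=
  exists e, [/\ e \in I, sop e e = e & ~ is_zero e].

Lemma pow_in (S : fsg) (I : {set S}) : HIp I -> forall c n, c \in I -> pow c n \in I.
Proof. by move=> HI c; elim=> [|n IH] //= cI; case: (HI _ c (IH cI)). Qed.

Lemma He_of (S : fsg) (I : {set S}) : HIp I -> Hjp I -> (exists c, c \in I) ->
  (forall z : S, is_zero z -> exists c, c \in I /\ ~ is_zero c) ->
  (forall c : S, c \in I -> (forall x, x \in I -> is_zero (sop x c)) -> is_zero c) ->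
  Hep I.
Proof.
move=> HI Hj [c0 c0I] Hnt Hf.
case: (classic (has_zero S)) => [[z hz]|hnz].
- case: (Hnt z hz) => c [cI cnz].
  apply: (he_lemma HI Hj).
  apply: NNPP => hne; apply: cnz; apply: (Hf c cI) => x xI.
  by apply: NNPP => hx; apply: hne; exists c, x.
- case: (pow_idem_ex c0) => n hn.
  exists (pow c0 n); split => //; first exact: pow_in.
  by move=> h; apply: hnz; exists (pow c0 n).
Qed.

Lemma Hnt_of (S : fsg) (I : {set S}) : distinguished_ideal I ->
  forall z : S, is_zero z -> exists c, c \in I /\ ~ is_zero c.
Proof.
move=> hd z hz; case: (hd) => hzm _; case: (hzm z hz) => [[ne cl] [hne _]].
apply: NNPP => h; apply: (negP hne); apply/eqP/setP => x; rewrite inE.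
apply/idP/idP.
- move=> xI; apply/eqP; apply: zero_uniq hz; apply: NNPP => hx; apply: h; by exists x.
- move/eqP => ->; case/set0Pn: ne => y yI; case: (hz y) => _ <-; by case: (cl y z yI).
Qed.

Section Key.
Variable S : fsg.
Variable R : S -> S -> Prop.
Hypothesis Rs : forall a b, R a b -> R b a.
Hypothesis Rc : forall p a b, R a b -> R (sop p a) (sop p b) /\ R (sop a p) (sop b p).
Hypothesis Ri : forall a b, R a b -> sop a a = a -> sop a b = a /\ sop b a = a.

Lemma RcL p a b : R a b -> R (sop p a) (sop p b). Proof. by case/(Rc p). Qed.
Lemma RiL a b : R a b -> sop a a = a -> sop a b = a. Proof. by move=> h hi; case: (Ri h hi). Qed.
Lemma RcR p a b : R a b -> R (sop (f:=dual S) p a) (sop (f:=dual S) p b).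
Proof. by case/(Rc p). Qed.
Lemma RiR a b : R a b -> sop (f:=dual S) a a = a -> sop (f:=dual S) a b = a.
Proof. by move=> h hi; case: (Ri h hi). Qed.

Lemma Rm1 u a b : R a b -> R (m1 u a) (m1 u b).
Proof. by case: u => //= u; apply: RcL. Qed.

Variable I : {set S}.
Hypothesis HI : HIp I.
Hypothesis Hj : Hjp I.

Lemma GL_R (He : Hep I) c d : R c d -> c \in I -> d \in I -> GL c d.
Proof.
move=> hcd cI dI; split; first exact: (leL_R HI Hj He RcL RiL hcd cI).
exact: (leL_R HI Hj He RcL RiL (Rs hcd) dI).
Qed.

Lemma He_dual : Hep I -> Hep (S:=dual S) I.
Proof.
case=> e [eI ee enz]; exists e; split => // h; apply: enz.
exact: (proj1 (zero_dual e) h).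
Qed.

Lemma GR_R (He : Hep (S:=dual S) I) c d : R c d -> c \in I -> d \in I -> GR c d.
Proof.
move=> hcd cI dI.
have HI' := HI_dual HI; have Hj' := Hj_dual Hj.
split; first exact: (leL_R (S:=dual S) HI' Hj' He RcR RiR hcd cI).
exact: (leL_R (S:=dual S) HI' Hj' He RcR RiR (Rs hcd) dI).
Qed.
End Key.

Lemma key (S : fsg) (R : S -> S -> Prop) : semisimple_type S ->
  (forall a b, R a b -> R b a) ->
  (forall p a b, R a b -> R (sop p a) (sop p b) /\ R (sop a p) (sop b p)) ->
  (forall a b, R a b -> sop a a = a -> sop a b = a /\ sop b a = a) ->
  forall a b, R a b -> a = b.
Proof.
move=> hss Rs Rc Ri a b hab.
case: hss => [[I [hd faith]] | [[I [hd faith]] | [I [hd [hge rf lf]]]]].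
- case: (dist_props hd) => HI hne Hj.
  have He : Hep I.
    apply: (He_of HI Hj hne (Hnt_of hd)) => c cI hc.
    case: hne => x0 x0I; have hz := hc x0 x0I.
    suff -> : c = sop x0 c by [].
    apply: faith => x xI.
    have -> : sop x c = sop x0 c by apply: zero_uniq (hc x xI) hz.
    have -> : sop x (sop x0 c) = sop x0 c by case: (hz x).
    by split; left.
  apply: faith => x xI.
  apply: (GL_R Rs Rc Ri HI Hj He); first exact: (RcL Rc).
  + by case: (HI x a xI).
  + by case: (HI x b xI).
- case: (dist_props hd) => HI hne Hj.
  have He : Hep (S:=dual S) I.
    apply: (He_of (HI_dual HI) (Hj_dual Hj) hne).
    + move=> z hz; case: (Hnt_of hd (proj1 (zero_dual (S:=S) z) hz)) => c [cI cnz].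
      exists c; split => // h; apply: cnz; exact: (proj1 (zero_dual (S:=S) c) h).
    + move=> c cI hc; apply/zero_dual.
      case: hne => x0 x0I; have hz := proj1 (zero_dual (S:=S) _) (hc x0 x0I).
      suff -> : c = @sop S c x0 by [].
      apply: faith => x xI.
      have -> : @sop S c x = @sop S c x0 by apply: zero_uniq (proj1 (zero_dual (S:=S) _) (hc x xI)) hz.
      have -> : @sop S (@sop S c x0) x = @sop S c x0 by case: (hz x).
      by split; left.
  apply: faith => x xI.
  apply: (GR_R Rs Rc Ri HI Hj He); first by case: (Rc x _ _ hab).
  + by case: (HI x a xI).
  + by case: (HI x b xI).
- case: (dist_props hd) => HI hne Hj.
  case: hge => e [eI ee [x0 [hx0 [[hL _] _]]]].
  have He : Hep I.
    exists e; split => // hz; move/negP: hx0; apply.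
    case: hL => [->|[u ->]] //; by case: (hz u) => _ ->.
  have He' := He_dual He.
  apply: rf => x xI.
  have cI : sop x a \in I by case: (HI x a xI).
  have dI : sop x b \in I by case: (HI x b xI).
  have hcd : R (sop x a) (sop x b) by case: (Rc x _ _ hab).
  move: cI dI hcd; set c := sop x a; set d := sop x b => cI dI hcd.
  case: (regL HI Hj He cI) => f [ff [hfc hcf]].
  move/leLP: hfc => [u hu].
  have hg : R f (m1 u d) by rewrite hu; exact: (Rm1 Rc).
  have gI : m1 u d \in I by exact: (m1_in HI).
  have fI : f \in I by rewrite hu; exact: (m1_in HI).
  case: (GR_R Rs Rc Ri HI Hj He' hg fI gI) => _ /leRP [w hw].
  have fg := RiL Ri hg ff.
  have gf : m1 u d = f.
    rewrite hw; rewrite hw -m1r_sop ff in fg; by rewrite fg.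
  case: (GR_R Rs Rc Ri HI Hj He' hcd cI dI) => _ /leRP [w' hw'].
  move/leLP: hcf => [v hv].
  have h1 : m1 v (m1 u d) = d by rewrite hw' !m1m1r -hu -hv.
  by rewrite -h1 gf.
Qed.

Definition onemap (Y T : fsg) (phi : Y -> T) :=
  forall y y', phi y = phi y' -> sop (phi y) (phi y) = phi y -> y = y'.

Section Sub.
Variable Y : fsg.
Variable P : pred Y.
Hypothesis HP : forall a b, P a -> P b -> P (sop a b).
Definition sub_op (a b : {y : Y | P y}) : {y : Y | P y} :=
  exist _ (sop (val a) (val b)) (HP (valP a) (valP b)).
Lemma sub_assoc : associative sub_op.
Proof. by move=> a b c; apply: val_inj => /=; exact: sassoc. Qed.
Definition subfsg : fsg := @FSG {y : Y | P y} sub_op sub_assoc.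
Lemma val_hom : is_hom (fun y : subfsg => val y). Proof. by []. Qed.
Lemma val_injf : injective (fun y : subfsg => val y). Proof. exact: val_inj. Qed.
End Sub.

Lemma hom_pow (A B : fsg) (f : A -> B) : is_hom f -> forall x n, f (pow x n) = pow (f x) n.
Proof. by move=> hf x; elim=> [|n IH] //=; rewrite hf IH. Qed.

Definition W (T0 : fsg) : sclass := fun Z => exists (Y T' : fsg) (psi : Y -> Z) (phi : Y -> T'),
  [/\ is_hom psi, surjective psi, is_hom phi, gen1 T0 T' & onemap phi].

Lemma W_pv T0 : pseudovariety (W T0).
Proof.
case: (gen_pv (fun T => exists f : T0 -> T, is_hom f /\ bijective f)) => gu gp gs gq.
split.
- exists fsg_unit, fsg_unit, id, id; split; [done | by move=> y; exists y | done | exact: gu | by move=> [] [] ].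
- move=> A B [Y1 [T1 [psi1 [phi1 [h1 s1 h1' g1 o1]]]]] [Y2 [T2 [psi2 [phi2 [h2 s2 h2' g2 o2]]]]].
  exists (fsg_prod Y1 Y2), (fsg_prod T1 T2),
    (fun y => (psi1 y.1, psi2 y.2)), (fun y => (phi1 y.1, phi2 y.2)); split.
  + by move=> [a b] [c d]; rewrite /= /prod_op /= h1 h2.
  + move=> [a b]; case: (s1 a) => y1 <-; case: (s2 b) => y2 <-; by exists (y1, y2).
  + by move=> [a b] [c d]; rewrite /= /prod_op /= h1' h2'.
  + exact: gp.
  + move=> [a b] [c d] /= [e1 e2] [i1 i2].
    by rewrite (o1 a c e1 i1) (o2 b d e2 i2).
- move=> T U f hf fi [Y [T' [psi [phi [hp sp hph g o]]]]].
  pose P := fun y : Y => [exists t : T, f t == psi y].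
  have HP : forall a b, P a -> P b -> P (sop a b).
    move=> a b /existsP [ta /eqP ha] /existsP [tb /eqP hb]; apply/existsP.
    by exists (sop ta tb); rewrite hf ha hb hp.
  pose Y0 := subfsg HP.
  pose psi0 (y : Y0) : T := xchoose (existsP (valP y)).
  have hpsi0 : forall y : Y0, f (psi0 y) = psi (val y).
    by move=> y; apply/eqP; exact: (xchooseP (existsP (valP y))).
  exists Y0, T', psi0, (fun y : Y0 => phi (val y)); split => //.
  + by move=> a b; apply: fi; rewrite hf !hpsi0 /= hp.
  + move=> t; case: (sp (f t)) => y hy.
    have Py : P y by apply/existsP; exists t; rewrite hy.
    exists (exist _ y Py); apply: fi; by rewrite hpsi0.
  + by move=> a b /=; rewrite hph.
  + by move=> a b e i; apply: val_inj; exact: o.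
- move=> U T f hf fs [Y [T' [psi [phi [hp sp hph g o]]]]].
  exists Y, T', (fun y => f (psi y)), phi; split => //.
  + by move=> a b; rewrite hp hf.
  + move=> t; case: (fs t) => u <-; case: (sp u) => y <-; by exists y.
Qed.

Lemma W_key T0 (S : fsg) : semisimple_type S -> W T0 S -> gen1 T0 S.
Proof.
move=> hss [Y [T' [psi [phi [hp sp hph g o]]]]].
pose R := fun a b : S => exists y y', [/\ psi y = a, psi y' = b & phi y = phi y'].
have Rs : forall a b, R a b -> R b a.
  by move=> a b [y [y' [h1 h2 h3]]]; exists y', y; split.
have Rc : forall p a b, R a b -> R (sop p a) (sop p b) /\ R (sop a p) (sop b p).
  move=> p a b [y [y' [h1 h2 h3]]]; case: (sp p) => q hq; split.
  - by exists (sop q y), (sop q y'); rewrite !hp !hph h1 h2 h3 hq.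
  - by exists (sop y q), (sop y' q); rewrite !hp !hph h1 h2 h3 hq.
have Ri : forall a b, R a b -> sop a a = a -> sop a b = a /\ sop b a = a.
  move=> a b [y [y' [h1 h2 h3]]] ha.
  case: (pow_idem_ex (phi y)) => n hn.
  have hpe : pow (phi y) (n + n).+1 = pow (phi y) n by rewrite -pow_add hn.
  have idm : sop (pow (phi y) n) (pow (phi y) n) = pow (phi y) n := hn.
  have hpa : pow a (n + n).+1 = a := pow_idem _ ha.
  split.
  - have e : sop (pow y (n + n)) y' = pow y (n + n).+1.
      apply: o; first by rewrite /= !hph (hom_pow hph) h3.
      by rewrite hph (hom_pow hph) -h3 -[sop (pow _ (n+n)) _]/(pow (phi y) (n + n).+1) hpe.
    have := congr1 psi e; rewrite hp (hom_pow hp) h1 h2 (pow_idem _ ha) => ->.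
    by rewrite (hom_pow hp) h1 hpa.
  - have e : sop y' (pow y (n + n)) = pow y (n + n).+1.
      apply: o; first by rewrite -pow_comm !hph (hom_pow hph) h3.
      by rewrite hph (hom_pow hph) -h3 pow_comm hpe.
    have := congr1 psi e; rewrite hp (hom_pow hp) h1 h2 (pow_idem _ ha) => ->.
    by rewrite (hom_pow hp) h1 hpa.
have RR := key hss Rs Rc Ri.
pose P := fun t : T' => [exists y : Y, phi y == t].
have HP : forall a b, P a -> P b -> P (sop a b).
  move=> a b /existsP [ya /eqP ha] /existsP [yb /eqP hb]; apply/existsP.
  by exists (sop ya yb); rewrite hph ha hb.
pose T'' := subfsg HP.
pose pre (t : T'') : Y := xchoose (existsP (valP t)).
have hpre : forall t : T'', phi (pre t) = val t.
  by move=> t; apply/eqP; exact: (xchooseP (existsP (valP t))).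
pose h (t : T'') : S := psi (pre t).
have hh : is_hom h.
  move=> a b; rewrite /h -hp; apply: RR.
  exists (pre (sop a b)), (sop (pre a) (pre b)); split => //.
  by rewrite hph !hpre.
have sh : surjective h.
  move=> s; case: (sp s) => y <-.
  have Py : P (phi y) by apply/existsP; exists y.
  exists (exist _ (phi y) Py); rewrite /h; apply: RR.
  by exists (pre (exist _ (phi y) Py)), y; split => //; rewrite hpre.
apply: (gen1_trans g).
case: (gen_pv (fun T => exists f : T' -> T, is_hom f /\ bijective f)) => _ _ gs gq.
have hT'' : gen1 T' T''.
  exact: (gs _ _ _ (@val_hom _ _ HP) (@val_injf _ _ HP) (@gen1_self T')).
exact: (gq _ _ h hh sh hT'').
Qed.

Theorem theorem4p2 (S : fsg) :
  subdirectly_indecomposable S ->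
  join_irreducible (gen1 S) ->
  semisimple_type S ->
  forall T : fsg, malcev trivialPV (Excl S) T <-> Excl S T.
Proof.
move=> _ hJI hss T; split.
- apply: (gen_min (Excl_pv hJI)) => X [T0 [hT0 [phi [hphi hcond]]]] hX.
  have om : onemap phi.
    move=> y y' hyy' he.
    case: (hcond (phi y) he (ex_intro _ y erefl)) => U [hU [f [hf fi hiff]]].
    case: (proj1 (hiff y) (eqxx _)) => u hu.
    case: (proj1 (hiff y') _); first by rewrite hyy'.
    move=> u' hu'; case: (fintype1 hU) => u0 hu0.
    by rewrite -hu -hu' (hu0 u) (hu0 u').
  have hW : W T0 X.
    exists X, T0, id, phi; split => //; [by move=> y; exists y | exact: (@gen1_self T0)].
  exact: hT0 (W_key hss (pv_iso (W_pv T0) hW hX)).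
- move=> hT; apply: gen_sub; exists T; split => //; exists id; split => // e he _.
  exists fsg_unit; split; first by rewrite /trivialPV card_unit.
  exists (fun _ => e); split => //.
  + by move=> [] [].
  + by move=> x; split; [move/eqP ->; exists tt | case=> _ ->].
Qed.
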